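(* Let $T$ be an interval exchange map with admissible combinatorial data on an alphabet $\mathcal A$, having the Keane property, with total length $\lambda^*$. For every $k\ge0$, $$\max_{\alpha\in\mathcal A}\lambda^{(k)}_\alpha\ \ge\ \lambda^*\|Q(k)\|^{-1}\ \ge\ \min_{\alpha\in\mathcal A}\lambda^{(k)}_\alpha .$$ Moreover, $T$ satisfies condition (a) if and only if for every $\varepsilon>0$ there exists $C_\varepsilon>0$ such that for all $k\ge0$, $$\max_{\alpha\in\mathcal A}\lambda^{(k)}_\alpha\le C_\varepsilon\,\min_{\alpha\in\mathcal A}\lambda^{(k)}_\alpha\,\|Q(k)\|^\varepsilon .$$
   Context: Combinatorial data: bijections $\pi_0,\pi_1:\mathcal A\to\{1,\dots,d\}$ ($d=\#\mathcal A\ge2$), admissible if $\pi_0^{-1}(\{1,\dots,k\})\neq\pi_1^{-1}(\{1,\dots,k\})$ for $1\le k<d$. For $\lambda\in(0,\infty)^{\mathcal A}$: $\lambda^*=\sum\lambda_\alpha$, $I=[0,\lambda^* )$, $I_\alpha=[0,\lambda_\alpha)\times\{\alpha\}$, $j_\varepsilon(x,\alpha)=x+\sum_{\pi_\varepsilon(\beta)<\pi_\varepsilon(\alpha)}\lambda_\beta$, $T=j_1\circ j_0^{-1}$. Keane property: no $(\alpha,\beta,m)$ with $\pi_0(\beta)>1$, $m\ge1$, $T^m(j_0(0,\alpha))=j_0(0,\beta)$. Rauzy–Veech step: with $\pi_0(\alpha_0)=\pi_1(\alpha_1)=d$ and $\lambda_{\alpha_\varepsilon}>\lambda_{\alpha_{1-\varepsilon}}$,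 pass to the first return map to $[0,\lambda^*-\lambda_{\alpha_{1-\varepsilon}})$, the i.e.m. with $\hat\lambda_{\alpha_\varepsilon}=\lambda_{\alpha_\varepsilon}-\lambda_{\alpha_{1-\varepsilon}}$, other lengths unchanged, $\hat\pi_\varepsilon=\pi_\varepsilon$, $\hat\pi_{1-\varepsilon}(\alpha)=\pi_{1-\varepsilon}(\alpha)$ if $\pi_{1-\varepsilon}(\alpha)\le\pi_{1-\varepsilon}(\alpha_\varepsilon)$, $\pi_{1-\varepsilon}(\alpha)+1$ if $\pi_{1-\varepsilon}(\alpha_\varepsilon)<\pi_{1-\varepsilon}(\alpha)<d$, $\pi_{1-\varepsilon}(\alpha_\varepsilon)+1$ if $\pi_{1-\varepsilon}(\alpha)=d$; name $\alpha_\varepsilon$; matrix $V=\mathbf I+E_{\alpha_\varepsilon\alpha_{1-\varepsilon}}$ with $\lambda=V\hat\lambda$. Iterating gives lengths $\lambda^{[n]}$ and matrices $V^{[n]}$; every letter is the name of infinitely many steps. Accelerated algorithm: $n(0)=0$, $n(k+1)$ the largest integer such that steps $n(k)<n\le n(k+1)$ have at most $d-1$ distinct names; $Z(k)=V^{[n(k-1)+1]}\cdots V^{[n(k)]}$, $Q(k)=Z(1)\cdots Z(k)$ ($Q(0)=\mathbf I$), $\lambda^{(k)}=\lambda^{[n(k)]}$ (so $\lambda=Q(k)\lambda^{(k)}$). $\|M\|$ is the sum of the absolute values of the entries of $M$. Condition (a): for every $\varepsilon>0$ there is $C_\varepsilon>0$ with $\|Z(k+1)\|\le C_\varepsilon\|Q(k)\|^\varepsilon$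 for all $k\ge0$. *)

(* Defs.v *)
From HB Require Import structures.
From mathcomp Require Import all_boot all_order all_algebra.
From mathcomp Require Import boolp reals exp.
Set Implicit Arguments. Unset Strict Implicit. Unset Printing Implicit Defensive.
Import Order.TTheory GRing.Theory Num.Theory.
Local Open Scope ring_scope.

Section IEM.
Variables (R : realType) (A : finType).

Definition is_bij_onto (p : A -> nat) : Prop :=
  injective p /\ (forall a, (1 <= p a <= #|A|)%N) /\
  (forall i, (1 <= i <= #|A|)%N -> exists a, p a = i).

Definition admissible (p0 p1 : A -> nat) : Prop :=
  forall k, (1 <= k < #|A|)%N -> [set a | (p0 a <= k)%N] != [set a | (p1 a <= k)%N].

(** j_eps(0,alpha) : left endpoint of the subinterval of alpha *)
Definition startp (lam : A -> R) (p : A -> nat) (a : A) : R :=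
  \sum_(b : A | (p b < p a)%N) lam b.

Definition total_length (lam : A -> R) : R := \sum_a lam a.

(** T = j1 o j0^{-1} on I = [0, total length) (identity off I, irrelevant) *)
Definition iem (p0 p1 : A -> nat) (lam : A -> R) (x : R) : R :=
  match [pick a | (startp lam p0 a <= x) && (x < startp lam p0 a + lam a)] with
  | Some a => x - startp lam p0 a + startp lam p1 a
  | None => x
  end.

Definition keane (p0 p1 : A -> nat) (lam : A -> R) : Prop :=
  forall (a b : A) (m : nat), (1 < p0 b)%N -> (1 <= m)%N ->
    iter m (iem p0 p1 lam) (startp lam p0 a) <> startp lam p0 b.

Record rvdata := RVData { rv_p0 : A -> nat; rv_p1 : A -> nat; rv_len : A -> R }.

Definition last_letter (p : A -> nat) : option A := [pick a | p a == #|A|].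

(* new permutation pi_{1-eps}, with k = pi_{1-eps}(alpha_eps) *)
Definition rv_perm (p : A -> nat) (k : nat) : A -> nat :=
  fun a => if (p a <= k)%N then p a else if (p a < #|A|)%N then (p a).+1 else k.+1.

Definition rv_newlen (len : A -> R) (w l : A) : A -> R :=
  fun a => if a == w then len w - len l else len a.

(** one step: new data, and (name = winner alpha_eps, loser alpha_{1-eps});
    None (data unchanged) only if the step is undefined (tie), which
    never happens under the Keane property. *)
Definition rv_step (D : rvdata) : rvdata * option (A * A) :=
  let: RVData p0 p1 len := D in
  match last_letter p0, last_letter p1 with
  | Some a0, Some a1 =>
      if len a1 < len a0 then
        (RVData p0 (rv_perm p1 (p1 a0)) (rv_newlen len a0 a1), Some (a0, a1))
      else if len a0 < len a1 then
        (RVData (rv_perm p0 (p0 a1)) p1 (rv_newlen len a1 a0), Some (a1, a0))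
      else (D, None)
  | _, _ => (D, None)
  end.

Variables (p0 p1 : A -> nat) (lam : A -> R).

Definition rv_state (n : nat) : rvdata := iter n (fun D => (rv_step D).1) (RVData p0 p1 lam).

Definition rv_lambda (n : nat) : A -> R := rv_len (rv_state n).

(* (winner, loser) of step n (n >= 1) *)
Definition rv_wl (n : nat) : option (A * A) := (rv_step (rv_state n.-1)).2.

Definition rv_name (n : nat) : option A := omap fst (rv_wl n).

Definition mx := A -> A -> nat.
Definition mx1 : mx := fun a b => nat_of_bool (a == b).
Definition mxmul (M N : mx) : mx := fun a c => (\sum_b M a b * N b c)%N.
Definition mxprod (s : seq mx) : mx := foldr mxmul mx1 s.
(* ||M|| = sum of absolute values of entries (entries are nonnegative) *)
Definition mxnorm (M : mx) : nat := (\sum_a \sum_b M a b)%N.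

Definition rv_V (n : nat) : mx :=
  fun a b => (mx1 a b + nat_of_bool (rv_wl n == Some (a, b)))%N.

Definition ndist (lo m : nat) : nat :=
  size (undup [seq rv_name n | n <- iota lo.+1 (m - lo)]).

Definition accel_pred (lo : nat) : pred nat :=
  fun m => (lo <= m)%N && (ndist lo m <= #|A| - 1)%N.

Lemma accel_pred_lo lo : exists m, accel_pred lo m.
Proof. by exists lo; rewrite /accel_pred /ndist leqnn subnn. Qed.

(* n(k+1) = the largest m such that steps lo < n <= m have at most d-1 names
   (such a largest m exists since every letter names infinitely many steps;
   otherwise a junk value is returned) *)
Definition accel_next (lo : nat) : nat :=
  match pselect (exists ub, forall m, accel_pred lo m -> (m <= ub)%N) with
  | left h => let: exist ub hub := cid h in ex_maxn (accel_pred_lo lo) hub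
  | right _ => lo
  end.

Fixpoint accel_n (k : nat) : nat :=
  match k with 0 => 0%N | k'.+1 => accel_next (accel_n k') end.

Definition accel_Z (k : nat) : mx :=
  mxprod [seq rv_V n | n <- iota (accel_n k.-1).+1 (accel_n k - accel_n k.-1)].

Definition accel_Q (k : nat) : mx := mxprod [seq accel_Z i | i <- iota 1 k].

Definition accel_lambda (k : nat) : A -> R := rv_lambda (accel_n k).

Definition condition_a : Prop :=
  forall eps : R, 0 < eps -> exists C : R, 0 < C /\
    forall k, ((mxnorm (accel_Z k.+1))%:R : R) <= C * ((mxnorm (accel_Q k))%:R `^ eps).

End IEM.

Definition some_val (R : realType) (A : finType) (f : A -> R) : R :=
  if [pick a : A] is Some a then f a else 0.
Definition alph_max (R : realType) (A : finType) (f : A -> R) : R :=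
  \big[Order.max/some_val f]_(a : A) f a.
Definition alph_min (R : realType) (A : finType) (f : A -> R) : R :=
  \big[Order.min/some_val f]_(a : A) f a.

(* Main.v *)
Require Import Defs.
From HB Require Import structures.
From mathcomp Require Import all_boot all_order all_algebra.
From mathcomp Require Import boolp reals exp.
From mathcomp Require Import zify lra ring.
Import Order.TTheory GRing.Theory Num.Theory.
Local Open Scope ring_scope.
Set Implicit Arguments. Unset Strict Implicit. Unset Printing Implicit Defensive.


Section Mx.
Variables (R : realType) (A : finType).

Definition mxapp (M : mx A) (v : A -> R) : A -> R :=
  fun a => \sum_b (M a b)%:R * v b.

Lemma mxapp1 v : mxapp (@mx1 A) v = v.
Proof.
apply: funext => a; rewrite /mxapp (bigD1 a) //= /mx1 eqxx mul1r big1 ?addr0 //.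
by move=> b hb; rewrite eq_sym (negbTE hb) mul0r.
Qed.

Lemma mxappM (M N : mx A) (v : A -> R) : mxapp (mxmul M N) v = mxapp M (mxapp N v).
Proof.
apply: funext => a; rewrite /mxapp /mxmul.
under eq_bigr do rewrite natr_sum mulr_suml.
rewrite exchange_big; apply: eq_bigr => b _; rewrite mulr_sumr.
by apply: eq_bigr => c _; rewrite natrM mulrA.
Qed.

Lemma mxmul1r (M : mx A) : mxmul M (@mx1 A) = M.
Proof.
apply: funext => a; apply: funext => c.
rewrite /mxmul (bigD1 c) //= /mx1 eqxx muln1 big1 ?addn0 //.
by move=> b hb; rewrite (negbTE hb) muln0.
Qed.

Lemma mxmul1l (M : mx A) : mxmul (@mx1 A) M = M.
Proof.
apply: funext => a; apply: funext => c.
rewrite /mxmul (bigD1 a) //= /mx1 eqxx mul1n big1 ?addn0 //.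
by move=> b hb; rewrite eq_sym (negbTE hb) mul0n.
Qed.

Lemma mxmulA (M N P : mx A) : mxmul M (mxmul N P) = mxmul (mxmul M N) P.
Proof.
apply: funext => a; apply: funext => c; rewrite /mxmul.
under eq_bigr do rewrite big_distrr.
rewrite exchange_big /=.
apply: eq_bigr => e _; rewrite big_distrl /=.
by apply: eq_bigr => b _; rewrite mulnA.
Qed.

Lemma mxprod_cat (s t : seq (mx A)) : mxprod (s ++ t) = mxmul (mxprod s) (mxprod t).
Proof.
elim: s => [|M s IH] /=; first by rewrite mxmul1l.
by rewrite IH mxmulA.
Qed.

Lemma mxprod_rcons (s : seq (mx A)) (M : mx A) : mxprod (s ++ [:: M]) = mxmul (mxprod s) M.
Proof. by rewrite mxprod_cat /= mxmul1r. Qed.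

Lemma mxnormM (M N : mx A) : (mxnorm (mxmul M N) <= mxnorm M * mxnorm N)%N.
Proof.
rewrite /mxnorm /mxmul big_distrl /=; apply: leq_sum => a _.
rewrite big_distrl /= exchange_big /=; apply: leq_sum => b _.
rewrite -big_distrr /=; apply: leq_mul => //.
by rewrite [X in (_ <= X)%N](bigD1 b) //= leq_addr.
Qed.

Lemma mxapp_ge0 (M : mx A) (v : A -> R) a : (forall b, 0 <= v b) -> 0 <= mxapp M v a.
Proof. by move=> h; apply: sumr_ge0 => b _; rewrite mulr_ge0. Qed.

End Mx.



Section RV.
Variables (R : realType) (A : finType) (p0 p1 : A -> nat) (lam : A -> R).

Local Notation st := (rv_state p0 p1 lam).
Local Notation wl := (rv_wl p0 p1 lam).
Local Notation lb := (rv_lambda p0 p1 lam).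

Lemma stS n : st n.+1 = (rv_step (st n)).1.
Proof. by rewrite /rv_state iterS. Qed.

Lemma wlS n : wl n.+1 = (rv_step (st n)).2.
Proof. by []. Qed.

Definition lastin (D : rvdata R A) (x : A) :=
  last_letter (rv_p0 D) = Some x \/ last_letter (rv_p1 D) = Some x.

Lemma step_spec n :
  (wl n.+1 = None /\ st n.+1 = st n) \/
  (exists w l, wl n.+1 = Some (w, l) /\ rv_len (st n) l < rv_len (st n) w /\
     rv_len (st n.+1) = rv_newlen (rv_len (st n)) w l /\
     lastin (st n) w /\ lastin (st n) l /\ lastin (st n.+1) w /\
     (forall x, lastin (st n) x -> x = w \/ x = l)).
Proof.
rewrite wlS stS; case: (st n) => q0 q1 len.
rewrite /rv_step /lastin /=.
case E0: (last_letter q0) => [a0|]; last by left.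
case E1: (last_letter q1) => [a1|]; last by left.
case: ifP => h1.
  right; exists a0, a1; split=> //; split=> //; split=> //.
  split; first by left. split; first by right. split; first by left.
  by move=> x /= [[<-]|[<-]]; [left|right].
case: ifP => h2; last by left.
right; exists a1, a0; split=> //; split=> //; split=> //.
split; first by right. split; first by left. split; first by right.
by move=> x /= [[<-]|[<-]]; [right|left].
Qed.

Lemma lb_step n a :
  lb n.+1 a = (if wl n.+1 is Some (w, l) then
                 (if a == w then lb n w - lb n l else lb n a) else lb n a).
Proof.
rewrite /rv_lambda; case: (step_spec n) => [[-> ->]//|[w [l [-> [_ [-> _]]]]]].
by rewrite /rv_newlen; case: (a == w).
Qed.

Lemma wl_lt n w l : wl n.+1 = Some (w, l) -> lb n l < lb n w.
Proof.
by case: (step_spec n) => [[-> _]//|[w' [l' [-> [h _]]]] [<- <-]].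
Qed.

Lemma wl_neq n w l : wl n.+1 = Some (w, l) -> w != l.
Proof. by move/wl_lt; apply: contraTneq => ->; rewrite ltxx. Qed.

Lemma lb_pos : (forall a, 0 < lam a) -> forall n a, 0 < lb n a.
Proof.
move=> hl; elim=> [|n IH] a; first exact: hl.
rewrite lb_step; case E: (wl n.+1) => [[w l]|]; last exact: IH.
by case: eqP => // _; rewrite subr_gt0 (wl_lt E).
Qed.

Lemma optpairE (w l a b : A) : (Some (w, l) == Some (a, b)) = (w == a) && (l == b).
Proof. by apply/eqP/andP => [[-> ->]|[/eqP -> /eqP ->]]. Qed.

Lemma lb_V n : lb n = mxapp (rv_V p0 p1 lam n.+1) (lb n.+1).
Proof.
apply: funext => a; rewrite /mxapp /rv_V.
under eq_bigr do rewrite natrD mulrDl.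
rewrite big_split /= -[X in _ = X + _]/(mxapp (@mx1 A) (lb n.+1) a) mxapp1.
rewrite lb_step; case E: (wl n.+1) => [[w l]|]; last first.
  by rewrite big1 ?addr0 // => b _; rewrite mul0r.
have hwl := wl_neq E.
case: (eqVneq a w) => [->|haw].
  rewrite (bigD1 l) //= eqxx big1 ?addr0; last first.
    by move=> b hb; rewrite optpairE eqxx /= eq_sym (negbTE hb) mul0r.
  rewrite mul1r lb_step E eq_sym (negbTE hwl).
  by rewrite subrK.
rewrite big1 ?addr0 //.
by move=> b _; rewrite optpairE eq_sym (negbTE haw) mul0r.
Qed.

Lemma lb_chain m j :
  lb m = mxapp (mxprod [seq rv_V p0 p1 lam i | i <- iota m.+1 j]) (lb (m + j)).
Proof.
elim: j m => [|j IH] m /=; first by rewrite addn0 mxapp1.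
by rewrite mxappM -addSnnS -IH -lb_V.
Qed.

Lemma wl_None_frozen n : wl n.+1 = None -> forall m, (n <= m)%N ->
  st m = st n /\ wl m.+1 = None.
Proof.
move=> h0.
have fx : (rv_step (st n)).1 = st n.
  case: (step_spec n) => [[_ h]|[? [? [h _]]]]; first by rewrite -stS h.
  by rewrite h in h0.
have hN : (rv_step (st n)).2 = None by rewrite -wlS.
have key : forall m, (n <= m)%N -> st m = st n.
  elim=> [|m IH]; first by rewrite leqn0 => /eqP ->.
  rewrite leq_eqVlt => /orP[/eqP <-//|/IH h].
  by rewrite stS h fx.
by move=> m hm; split; [exact: (key m hm)|rewrite wlS (key m hm)].
Qed.

End RV.



Section Acc.
Variables (R : realType) (A : finType) (p0 p1 : A -> nat) (lam : A -> R).

Local Notation st := (rv_state p0 p1 lam).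
Local Notation wl := (rv_wl p0 p1 lam).
Local Notation lb := (rv_lambda p0 p1 lam).
Local Notation nn := (accel_n p0 p1 lam).
Local Notation pr := (accel_pred p0 p1 lam).
Local Notation bnd lo := (exists ub, forall m, accel_pred p0 p1 lam lo m -> (m <= ub)%N).

Lemma accel_next_pred lo : pr lo (accel_next p0 p1 lam lo).
Proof.
rewrite /accel_next; case: pselect => h.
  by case: cid => ub hub; case: ex_maxnP.
by rewrite /accel_pred /ndist leqnn subnn.
Qed.

Lemma accel_next_max lo : bnd lo -> forall m, pr lo m -> (m <= accel_next p0 p1 lam lo)%N.
Proof.
move=> hb; rewrite /accel_next; case: pselect => h; last by case: (h hb).
by case: cid => ub hub; case: ex_maxnP.
Qed.

Lemma accel_next_stuck lo : ~ bnd lo -> accel_next p0 p1 lam lo = lo.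
Proof. by move=> hb; rewrite /accel_next; case: pselect. Qed.

Lemma nn_le k : (nn k <= nn k.+1)%N.
Proof. by have /andP[] := accel_next_pred (nn k). Qed.

Lemma nn_mono k k' : (k <= k')%N -> (nn k <= nn k')%N.
Proof.
move=> /subnKC <-; elim: (k' - k)%N => [|i IH]; first by rewrite addn0.
by rewrite addnS (leq_trans IH (nn_le _)).
Qed.

Lemma lam_Z k : accel_lambda p0 p1 lam k =
  mxapp (accel_Z p0 p1 lam k.+1) (accel_lambda p0 p1 lam k.+1).
Proof.
rewrite /accel_lambda /accel_Z /=.
by rewrite (lb_chain _ _ _ (nn k) (nn k.+1 - nn k)) subnKC // nn_le.
Qed.

Lemma Q_S k : accel_Q p0 p1 lam k.+1 = mxmul (accel_Q p0 p1 lam k) (accel_Z p0 p1 lam k.+1).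
Proof.
rewrite /accel_Q (_ : iota 1 k.+1 = cat (iota 1 k) [:: k.+1]); last by rewrite -[k.+1]addn1 iotaD add1n addn1.
by rewrite map_cat mxprod_rcons.
Qed.

Lemma lam_Q k : lam = mxapp (accel_Q p0 p1 lam k) (accel_lambda p0 p1 lam k).
Proof.
elim: k => [|k IH]; first by rewrite /accel_Q /= mxapp1.
by rewrite Q_S mxappM -lam_Z.
Qed.

Definition names lo hi := [seq rv_name p0 p1 lam m | m <- iota lo.+1 (hi - lo)].

Lemma block_missing k : (1 <= #|A|)%N ->
  exists b, forall m, (nn k < m <= nn k.+1)%N -> rv_name p0 p1 lam m != Some b.
Proof.
move=> hA.
have /andP[hle hnd] := accel_next_pred (nn k).
rewrite -/(accel_n _ _ _ k.+1) in hle hnd.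
case: (pickP (fun b => Some b \notin names (nn k) (nn k.+1))) => [b hb|hall].
  exists b => m hm; apply: contraNneq hb => <-.
  apply: map_f; rewrite mem_iota; case/andP: hm => h1 h2.
  by rewrite h1 /= addSn subnKC // ltnS.
exfalso.
have : (#|A| <= ndist p0 p1 lam (nn k) (nn k.+1))%N.
  rewrite /ndist cardE -(size_map (@Some A)).
  apply: uniq_leq_size; first by rewrite (map_inj_uniq (@Some_inj _)) enum_uniq.
  move=> o /mapP [b _ ->]; rewrite mem_undup.
  by have := hall b; rewrite /= => /negbFE.
move=> h; have := leq_trans h hnd.
by case: #|A| hA => // n _; rewrite subn1 /= ltnn.
Qed.

Lemma lb_unchanged b lo hi : (lo <= hi)%N ->
  (forall m, (lo < m <= hi)%N -> rv_name p0 p1 lam m != Some b) -> lb hi b = lb lo b.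
Proof.
move=> /subnKC <-; elim: (hi - lo)%N => [|i IH] h; first by rewrite addn0.
rewrite addnS lb_step.
have hn := h (lo + i).+1; rewrite /rv_name in hn.
case E: (wl (lo + i).+1) => [[w l]|]; last first.
  by apply: IH => m /andP[h1 h2]; apply: h; rewrite h1 /= addnS ltnW.
rewrite E /= in hn.
case: eqP => [eb|_].
  by subst; rewrite eqxx in hn; move: hn; rewrite ltnS leq_addr addnS leqnn => /(_ isT).
by apply: IH => m /andP[h1 h2]; apply: h; rewrite h1 /= addnS ltnW.
Qed.

End Acc.



Section Supp.
Variables (R : realType) (A : finType) (p0 p1 : A -> nat) (lam : A -> R).

Local Notation st := (rv_state p0 p1 lam).
Local Notation wl := (rv_wl p0 p1 lam).
Local Notation lb := (rv_lambda p0 p1 lam).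

Lemma growth (S : {set A}) u v x y l1 l2 : (u < v)%N ->
  wl u.+1 = Some (x, l1) -> x \notin S -> wl v.+1 = Some (y, l2) -> y \in S ->
  exists j w l, [/\ (u < j <= v)%N, wl j.+1 = Some (w, l), w \in S & l \notin S].
Proof.
move=> huv hu hx hv hy.
pose G i := (exists j w l, [/\ (u < j < i)%N, wl j.+1 = Some (w, l), w \in S & l \notin S])
   \/ exists z, z \notin S /\ lastin (st i) z.
have G0 : G u.+1.
  right; exists x; split=> //.
  case: (step_spec p0 p1 lam u) => [[h _]|[w [l [h [_ [_ [_ [_ [hw _]]]]]]]]]; first by rewrite h in hu.
  by rewrite h in hu; case: hu => <- _.
have Gi : forall i, (u.+1 + i <= v)%N -> G (u.+1 + i)%N.
  elim=> [|i IH] hi; first by rewrite addn0.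
  have hi2 : (u.+1 + i <= v)%N by rewrite addnS in hi; exact: ltnW.
  have := IH hi2.
  case=> [[j [w [l [h1 h2 h3 h4]]]]|[z [hz hlz]]].
    left; exists j, w, l; split=> //.
    by case/andP: h1 => -> /= h; rewrite addnS ltnW.
  rewrite /G addnS.
  case: (step_spec p0 p1 lam (u.+1 + i)) => [[_ ->]|[w [l [h [_ [_ [_ [_ [hw hall]]]]]]]]].
    by right; exists z.
  case: (hall z hlz) => ez; subst z.
    by right; exists w.
  case: (boolP (w \in S)) => hwS.
    left; exists (u.+1 + i)%N, w, l; split=> //.
    by rewrite ltnS leq_addr /= ltnSn.
  by right; exists w.
have := Gi (v - u.+1)%N; rewrite subnKC // => /(_ (leqnn _)).
case=> [[j [w [l [h1 h2 h3 h4]]]]|[z [hz hlz]]].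
  by exists j, w, l; split=> //; case/andP: h1 => -> /= /ltnW.
case: (step_spec p0 p1 lam v) => [[h _]|[w [l [h [_ [_ [_ [_ [hw hall]]]]]]]]]; first by rewrite h in hv.
rewrite h in hv; case: hv => ew el; subst w l.
exists v, y, l2; split=> //; first by rewrite huv leqnn.
case: (hall z hlz) => ez; subst z; first by rewrite hy in hz.
by [].
Qed.

Fixpoint supp (s : nat) (al : A) (t : nat) : {set A} :=
  match t with
  | 0 => [set al]
  | t'.+1 => if (t' < s)%N then [set al] else
      let S := supp s al t' in
      if wl t'.+1 is Some (w, l) then (if w \in S then l |: S else S) else S
  end.

Lemma supp_start s al : supp s al s = [set al].
Proof. by case: s => //= s; rewrite ltnSn. Qed.

Lemma supp_step s al t : (s <= t)%N -> supp s al t \subset supp s al t.+1.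
Proof.
move=> hst /=; rewrite ltnNge hst /=.
case: (wl t.+1) => [[w l]|] //; case: ifP => // _; exact: subsetUr.
Qed.

Lemma supp_mono s al t t' : (s <= t)%N -> (t <= t')%N -> supp s al t \subset supp s al t'.
Proof.
move=> hst /subnKC <-; elim: (t' - t)%N => [|i IH]; first by rewrite addn0.
apply: subset_trans IH _; rewrite addnS; apply: supp_step.
exact: leq_trans hst (leq_addr _ _).
Qed.

Lemma supp_grow s al t w l : (s <= t)%N -> wl t.+1 = Some (w, l) ->
  w \in supp s al t -> l \in supp s al t.+1.
Proof.
by move=> hst h hw /=; rewrite ltnNge hst /= h hw setU11.
Qed.

Lemma supp_al s al t : (s <= t)%N -> al \in supp s al t.
Proof.
move=> hst; apply: (subsetP (supp_mono al (leqnn s) hst)).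
by rewrite supp_start set11.
Qed.

Lemma supp_sum s al t : (forall n a, 0 <= lb n a) -> (s <= t)%N ->
  \sum_(b in supp s al t) lb t b <= lb s al.
Proof.
move=> hpos; elim: t => [|t IH] hst.
  by move: hst; rewrite leqn0 => /eqP ->; rewrite /= big_set1.
case: (ltnP t s) => hts.
  have -> : s = t.+1 by apply/eqP; rewrite eqn_leq hst hts.
  by rewrite supp_start big_set1.
apply: le_trans (IH hts).
rewrite /= ltnNge hts /=.
set S := supp s al t.
have key : forall w l, wl t.+1 = Some (w, l) ->
  \sum_(b in S) lb t.+1 b + (if w \in S then lb t l else 0) = \sum_(b in S) lb t b.
  move=> w l h; case: ifP => hw.
    rewrite (bigD1 w) //= [X in _ = X](bigD1 w) //= lb_step h eqxx.
    rewrite addrAC subrK; congr (_ + _).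
    by apply: eq_bigr => b /andP[_ hb]; rewrite lb_step h (negbTE hb).
  rewrite addr0; apply: eq_bigr => b hb; rewrite lb_step h.
  by case: eqP => // ebw; subst b; rewrite hb in hw.
case E: (wl t.+1) => [[w l]|]; last first.
  by rewrite le_eqVlt; apply/orP; left; apply/eqP/eq_bigr => b _; rewrite lb_step E.
have := key w l E.
case: ifP => hw; last by rewrite addr0 => ->.
have hwl := wl_neq E.
case: (boolP (l \in S)) => hl.
  have -> : l |: S = S by apply/setP => b; rewrite in_setU1; case: eqP => // ->.
  by move=> <-; rewrite lerDl hpos.
rewrite big_setU1 //= => <-; rewrite addrC lb_step E eq_sym (negbTE hwl).
by [].
Qed.

End Supp.



Section Blocks.
Variables (R : realType) (A : finType) (p0 p1 : A -> nat) (lam : A -> R).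
Hypothesis hA : (2 <= #|A|)%N.

Local Notation st := (rv_state p0 p1 lam).
Local Notation wl := (rv_wl p0 p1 lam).
Local Notation lb := (rv_lambda p0 p1 lam).
Local Notation nn := (accel_n p0 p1 lam).
Local Notation pr := (accel_pred p0 p1 lam).
Local Notation bnd lo := (exists ub, forall m, accel_pred p0 p1 lam lo m -> (m <= ub)%N).

Definition allbnd := forall j, bnd (nn j).

Lemma ndist_le1 lo hi : (forall o, o \in names p0 p1 lam lo hi -> o = None) ->
  (ndist p0 p1 lam lo hi <= #|A| - 1)%N.
Proof.
move=> h; apply: leq_trans (_ : 1 <= _)%N; last by lia.
rewrite /ndist -/(names p0 p1 lam lo hi).
have -> : (1 = size [:: @None A])%N by [].
apply: uniq_leq_size; first exact: undup_uniq.
by move=> o; rewrite mem_undup => /h ->; rewrite inE.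
Qed.

Lemma nn_lt (hb : allbnd) j : (nn j < nn j.+1)%N.
Proof.
have [ub hub] := hb j.
apply: (accel_next_max (ex_intro _ ub hub)).
rewrite /accel_pred leqnSn /= /ndist subSnn /=. by rewrite subn_gt0.
Qed.

Lemma nn_ge (hb : allbnd) j : (j <= nn j)%N.
Proof. elim: j => // j IH; exact: leq_ltn_trans IH (nn_lt hb j). Qed.

Lemma no_None (hb : allbnd) m : wl m.+1 <> None.
Proof.
move=> h0.
have hm : (m < nn m.+1)%N := nn_ge hb m.+1.
have [ub hub] := hb m.+1.
set lo := nn m.+1 in hm hub.
have : pr lo (lo + ub).+1.
  apply/andP; split; first by lia.
  apply: ndist_le1 => o /mapP [i]; rewrite mem_iota => /andP[h1 _] ->.
  rewrite /rv_name; case: i h1 => // i h1.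
  have hmi : (m <= i)%N by lia.
  by have [_ ->] := wl_None_frozen h0 hmi.
by move/hub; lia.
Qed.

Lemma all_win (hb : allbnd) j b :
  exists m, (nn j <= m < nn j.+2)%N /\ rv_name p0 p1 lam m.+1 = Some b.
Proof.
set lo := nn j; set hi := nn j.+1.
have [ub hub] := hb j.
have hnp : ~~ pr lo hi.+1.
  apply/negP => /(accel_next_max (ex_intro _ ub hub)); rewrite -/(nn j.+1) -/hi; lia.
have hlohi : (lo <= hi)%N by exact: nn_le.
have : Some b \in names p0 p1 lam lo hi.+1.
  apply: contraNT hnp => hnb; apply/andP; split; first by lia.
  rewrite /ndist -/(names p0 p1 lam lo hi.+1).
  apply: leq_trans (_ : size [seq Some c | c <- enum (predC1 b)] <= _)%N.
    apply: uniq_leq_size; first exact: undup_uniq.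
    move=> o; rewrite mem_undup => ho.
    have := ho; move=> /mapP [i hi1 ei].
    case: i hi1 ei => [|i] hi1 ei.
      by move: hi1; rewrite mem_iota.
    move: ei; rewrite /rv_name; case E: (wl i.+1) => [[w l]|]; last by case: (no_None hb E).
    move=> /= eo; subst o; apply: map_f; rewrite mem_enum /= inE.
    by apply: contraNneq hnb => <-.
  by rewrite size_map -cardE cardC1; lia.
move=> /mapP [i]; rewrite mem_iota => /andP [h1 h2] ei.
case: i h1 h2 ei => // i h1 h2 ei.
exists i; split=> //.
have := nn_lt hb j.+1; rewrite -/hi; lia.
Qed.

Lemma name_wl m b : rv_name p0 p1 lam m = Some b -> exists l, wl m = Some (b, l).
Proof. by rewrite /rv_name; case: (wl m) => [[w l]|] //= [->]; exists l. Qed.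

Lemma card_supp (hb : allbnd) k al i :
  (minn i.+1 #|A| <= #|supp p0 p1 lam (nn k) al (nn (k + 4 * i))|)%N.
Proof.
have hk : forall j, (nn k <= nn (k + j))%N by move=> j; apply: nn_mono; lia.
elim: i => [|i IH].
  by rewrite muln0 addn0 supp_start cards1; lia.
set a := nn (k + 4 * i) in IH.
set S := supp p0 p1 lam (nn k) al a in IH.
set T := supp p0 p1 lam (nn k) al (nn (k + 4 * i.+1)).
have e4 : (k + 4 * i.+1 = (k + 4 * i).+2.+2)%N by lia.
have hST : S \subset T.
  apply: supp_mono; first exact: hk.
  by rewrite e4; apply: nn_mono; lia.
case: (ltnP #|S| #|A|) => hS; last first.
  by apply: leq_trans (subset_leq_card hST); lia.
case: (pickP (fun x => x \notin S)) => [x hx|hall]; last first.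
  have : S = setT by apply/setP => x; rewrite in_setT; have := hall x => /= /negbFE.
  by move=> eS; rewrite eS cardsT ltnn in hS.
have [u [hu1 hu2]] := all_win hb (k + 4 * i) x.
have [v [hv1 hv2]] := all_win hb (k + 4 * i).+2 al.
have [l1 hl1] := name_wl hu2.
have [l2 hl2] := name_wl hv2.
have halS : al \in S by apply: supp_al; exact: hk.
have huv : (u < v)%N by lia.
have [j [w [l [hj hwl hw hl]]]] := growth huv hl1 hx hl2 halS.
have hkj : (nn k <= j)%N by have := hk (4 * i)%N; rewrite -/a; lia.
have hjS : S \subset supp p0 p1 lam (nn k) al j by apply: supp_mono; [exact: hk|lia].
have hlj := supp_grow hkj hwl (subsetP hjS w hw).
have hjT : supp p0 p1 lam (nn k) al j.+1 \subset T.
  by apply: supp_mono; [lia|rewrite e4; lia].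
have hp : S \proper T by apply/properP; split=> //; exists l => //; exact: (subsetP hjT).
have := proper_card hp; lia.
Qed.

Lemma full_sum (hb : allbnd) : (forall n a, 0 <= lb n a) -> forall k al,
  \sum_b lb (nn (k + 4 * #|A|)) b <= accel_lambda p0 p1 lam k al.
Proof.
move=> hpos k al.
have hc := card_supp hb k al #|A|.
have hk : (nn k <= nn (k + 4 * #|A|))%N by apply: nn_mono; lia.
have eT : supp p0 p1 lam (nn k) al (nn (k + 4 * #|A|)) = setT.
  apply/eqP; rewrite eqEcard subsetT cardsT; move: hc; rewrite (_ : minn _ _ = #|A|) //; lia.

have := supp_sum al hpos hk; rewrite eT.
by under eq_bigl do rewrite in_setT.
Qed.

End Blocks.



Section Alph.
Variables (R : realType) (A : finType).

Lemma le_alph_max (f : A -> R) a : f a <= alph_max f.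
Proof. by rewrite /alph_max (bigD1 a) //= le_max lexx. Qed.

Lemma ge_alph_min (f : A -> R) a : alph_min f <= f a.
Proof. by rewrite /alph_min (bigD1 a) //= ge_min lexx. Qed.

Lemma alph_max_ex (a0 : A) (f : A -> R) : exists a, alph_max f = f a.
Proof.
rewrite /alph_max; apply: (big_ind (fun y => exists a, y = f a)).
- by rewrite /some_val; case: pickP => [a _|h]; [exists a|have := h a0].
- by move=> x y [a ->] [b ->]; case: leP => _; [exists b|exists a].
- by move=> a _; exists a.
Qed.

Lemma alph_min_ex (a0 : A) (f : A -> R) : exists a, alph_min f = f a.
Proof.
rewrite /alph_min; apply: (big_ind (fun y => exists a, y = f a)).
- by rewrite /some_val; case: pickP => [a _|h]; [exists a|have := h a0].
- by move=> x y [a ->] [b ->]; case: leP => _; [exists a|exists b].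
- by move=> a _; exists a.
Qed.

Lemma sum_le_max (f : A -> R) : \sum_a f a <= #|A|%:R * alph_max f.
Proof.
apply: le_trans (_ : \sum_(a : A) alph_max f <= _).
  by apply: ler_sum => a _; exact: le_alph_max.
by rewrite sumr_const mulr_natl.
Qed.

Lemma sum_mxapp_le (M : mx A) (v : A -> R) :
  \sum_a mxapp M v a <= (mxnorm M)%:R * alph_max v.
Proof.
rewrite /mxapp /mxnorm natr_sum mulr_suml; apply: ler_sum => a _.
rewrite natr_sum mulr_suml; apply: ler_sum => b _.
by apply: ler_wpM2l; [exact: ler0n|exact: le_alph_max].
Qed.

Lemma sum_mxapp_ge (M : mx A) (v : A -> R) :
  (mxnorm M)%:R * alph_min v <= \sum_a mxapp M v a.
Proof.
rewrite /mxapp /mxnorm natr_sum mulr_suml; apply: ler_sum => a _.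
rewrite natr_sum mulr_suml; apply: ler_sum => b _.
by apply: ler_wpM2l; [exact: ler0n|exact: ge_alph_min].
Qed.

Lemma max_mxapp (a0 : A) (M : mx A) (v : A -> R) : (forall b, 0 <= v b) ->
  alph_max (mxapp M v) <= (mxnorm M)%:R * alph_max v.
Proof.
move=> hv; have [a ->] := alph_max_ex a0 (mxapp M v).
have hm : 0 <= alph_max v := le_trans (hv a0) (le_alph_max v a0).
apply: le_trans (_ : (\sum_b M a b)%:R * alph_max v <= _); last first.
  apply: ler_wpM2r => //; rewrite ler_nat /mxnorm.
  by rewrite [X in (_ <= X)%N](bigD1 a) //= leq_addr.
rewrite /mxapp natr_sum mulr_suml; apply: ler_sum => b _.
by apply: ler_wpM2l; [exact: ler0n|exact: le_alph_max].
Qed.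

End Alph.



Section Main.
Variables (R : realType) (A : finType) (p0 p1 : A -> nat) (lam : A -> R).
Hypothesis hA : (2 <= #|A|)%N.
Hypothesis hl : forall a, 0 < lam a.
Variable a0 : A.

Local Notation Nq k := ((mxnorm (accel_Q p0 p1 lam k))%:R : R).
Local Notation Zq k := ((mxnorm (accel_Z p0 p1 lam k))%:R : R).
Local Notation lk k := (accel_lambda p0 p1 lam k).
Local Notation mxk k := (alph_max (accel_lambda p0 p1 lam k)).
Local Notation mnk k := (alph_min (accel_lambda p0 p1 lam k)).

Lemma lk_pos k a : 0 < lk k a.
Proof. exact: lb_pos. Qed.

Lemma sum_pos (f : A -> R) : (forall a, 0 < f a) -> 0 < \sum_a f a.
Proof.
move=> hf; apply: (lt_le_trans (hf a0)); rewrite (bigD1 a0) //= lerDl.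
by apply: sumr_ge0 => a _; exact: ltW.
Qed.

Lemma F1 k : 1 <= Nq k.
Proof.
have hs := sum_mxapp_le (accel_Q p0 p1 lam k) (lk k); rewrite -lam_Q in hs.
rewrite ler1n lt0n; apply/negP => /eqP h0; rewrite h0 mul0r in hs.
by have := lt_le_trans (sum_pos hl) hs; rewrite ltxx.
Qed.

Lemma F2 k : 1 <= Zq k.+1.
Proof.
have hs := sum_mxapp_le (accel_Z p0 p1 lam k.+1) (lk k.+1); rewrite -lam_Z in hs.
rewrite ler1n lt0n; apply/negP => /eqP h0; rewrite h0 mul0r in hs.
by have := lt_le_trans (sum_pos (lk_pos k)) hs; rewrite ltxx.
Qed.

Lemma F3 k : Nq k.+1 <= Nq k * Zq k.+1.
Proof. by rewrite Q_S -natrM ler_nat mxnormM. Qed.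

Lemma F4 k : mxk k <= Zq k.+1 * mxk k.+1.
Proof.
rewrite {1}lam_Z; apply: max_mxapp => // b; exact: ltW (lk_pos _ _).
Qed.

Lemma F5 k : Zq k.+1 * mnk k.+1 <= #|A|%:R * mxk k.
Proof.
apply: le_trans (sum_mxapp_ge _ _) _; rewrite -lam_Z; exact: sum_le_max.
Qed.

Lemma F6 k : mnk k <= mxk k.+1.
Proof.
have [b hb] := block_missing p0 p1 lam k (ltnW hA).
apply: le_trans (ge_alph_min _ b) _; apply: le_trans (le_alph_max _ b).
rewrite /accel_lambda (lb_unchanged (nn_le _ _ _ k) hb); exact: lexx.
Qed.

Lemma mnk_pos k : 0 < mnk k.
Proof. by have [a ->] := alph_min_ex a0 (lk k); exact: lk_pos. Qed.

Lemma part1 k : total_length lam / Nq k <= mxk k /\ mnk k <= total_length lam / Nq k.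
Proof.
have hN : 0 < Nq k := lt_le_trans ltr01 (F1 k).
split.
  rewrite ler_pdivrMr // mulrC /total_length.
  by have := sum_mxapp_le (accel_Q p0 p1 lam k) (lk k); rewrite -lam_Q.
rewrite ler_pdivlMr // mulrC /total_length.
by have := sum_mxapp_ge (accel_Q p0 p1 lam k) (lk k); rewrite -lam_Q.
Qed.

Lemma le_of_eq (x y : R) : x = y -> x <= y.
Proof. by move=> ->. Qed.

Lemma powRD' (x r s : R) : 0 < x -> x `^ (r + s) = x `^ r * x `^ s.
Proof. by move=> hx; rewrite powRD // (gt_eqF hx) implybT. Qed.

Lemma powR_le (x y r : R) : 0 <= x -> x <= y -> 0 <= r -> x `^ r <= y `^ r.
Proof.
move=> hx hxy hr; apply: (ge0_ler_powR hr) => //; rewrite nnegrE //.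
exact: le_trans hxy.
Qed.

Lemma dir_back :
  (forall eps : R, 0 < eps -> exists C : R, 0 < C /\
     forall k : nat, alph_max (accel_lambda p0 p1 lam k)
         <= C * alph_min (accel_lambda p0 p1 lam k)
              * ((mxnorm (accel_Q p0 p1 lam k))%:R `^ eps)) -> condition_a p0 p1 lam.
Proof.
move=> H eps he.
set dl := eps / (2 + eps).
have hdl : 0 < dl by rewrite /dl divr_gt0 //; lra.
have hdl1 : dl < 1 by rewrite /dl ltr_pdivrMr; lra.
have [C [hC HC]] := H dl hdl.
set K := #|A|%:R * (C * C).
have hK : 0 < K by rewrite /K mulr_gt0 ?mulr_gt0 // ltr0n; lia.
set q := (2 + eps) / 2.
have hq : 0 <= q by rewrite /q; apply: divr_ge0; lra.
exists (K `^ q); split; first exact: powR_gt0.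
move=> k.
have hz1 := F2 k; have hN1 := F1 k; have hN'1 := F1 k.+1.
have hz : 0 < Zq k.+1 := lt_le_trans ltr01 hz1.
have hN : 0 < Nq k := lt_le_trans ltr01 hN1.
have hN' : 0 < Nq k.+1 := lt_le_trans ltr01 hN'1.
have hm' := mnk_pos k.+1; have hm := mnk_pos k.
have h1 := F5 k; have h2 := HC k; have h3 := le_trans (F6 k) (HC k.+1).
have h4 := F3 k.
have pNd : 0 < Nq k `^ dl := powR_gt0 _ hN.
have pN'd : 0 < Nq k.+1 `^ dl := powR_gt0 _ hN'.
have hA1 : Zq k.+1 <= K * Nq k `^ dl * Nq k.+1 `^ dl.
  rewrite -(ler_pM2r hm').
  apply: le_trans h1 _.
  apply: le_trans (_ : #|A|%:R * (C * mnk k * Nq k `^ dl) <= _).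
    by apply: ler_wpM2l => //; exact: ler0n.
  apply: le_trans (_ : #|A|%:R * (C * (C * mnk k.+1 * Nq k.+1 `^ dl) * Nq k `^ dl) <= _).
    apply: ler_wpM2l; first exact: ler0n.
    apply: ler_wpM2r; first exact: ltW.
    by apply: ler_wpM2l => //; exact: ltW.
  by rewrite /K; apply: le_of_eq; ring.
have hB : Nq k.+1 `^ dl <= Nq k `^ dl * Zq k.+1 `^ dl.
  rewrite -powRM ?(ltW hN) ?(ltW hz) //.
  by apply: powR_le; [exact: ltW hN'|exact: h4|exact: ltW hdl].
have ez : Zq k.+1 `^ dl * Zq k.+1 `^ (1 - dl) = Zq k.+1.
  by rewrite -powRD' // (_ : dl + (1 - dl) = 1) ?powRr1 ?(ltW hz) //; lra.
have hAB : Zq k.+1 `^ dl * Zq k.+1 `^ (1 - dl) <=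
           Zq k.+1 `^ dl * (K * Nq k `^ (dl + dl)).
  rewrite ez; apply: le_trans hA1 _.
  apply: le_trans (_ : K * Nq k `^ dl * (Nq k `^ dl * Zq k.+1 `^ dl) <= _).
    apply: ler_wpM2l; last exact: hB.
    by rewrite mulr_ge0 // ltW // powR_gt0.
  by rewrite powRD' //; apply: le_of_eq; ring.
have hC' : Zq k.+1 `^ (1 - dl) <= K * Nq k `^ (dl + dl).
  by rewrite -(ler_pM2l (powR_gt0 dl hz)).
have e1 : (1 - dl) * q = 1 by rewrite /dl /q; field; lra.
have e2 : (dl + dl) * q = eps by rewrite /dl /q; field; lra.
have ez2 : Zq k.+1 = (Zq k.+1 `^ (1 - dl)) `^ q.
  by rewrite -powRrM e1 powRr1 // ltW.
rewrite [X in X <= _]ez2.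
apply: le_trans (powR_le (powR_ge0 _ _) hC' hq) _.
rewrite powRM ?(ltW hK) ?powR_ge0 // -powRrM e2.
exact: lexx.
Qed.

Definition QGp i := forall eta : R, 0 < eta -> exists C : R, 0 < C /\
  forall k, Nq (k + i) <= C * Nq k `^ (1 + eta).
Definition ZGp i := forall eta : R, 0 < eta -> exists C : R, 0 < C /\
  forall k, Zq (k + i).+1 <= C * Nq k `^ eta.

Lemma N_ge0 k : 0 <= Nq k. Proof. exact: ler0n. Qed.
Lemma Z_ge0 k : 0 <= Zq k. Proof. exact: ler0n. Qed.

Lemma ZG_of (ha : condition_a p0 p1 lam) i : QGp i -> ZGp i.
Proof.
move=> hq eta he.
have he2 : 0 < eta / 2 by lra.
have [C0 [hC0 H0]] := ha _ he2.
have [C1 [hC1 H1]] := hq 1 ltr01.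
exists (C0 * C1 `^ (eta / 2)); split; first by rewrite mulr_gt0 // powR_gt0.
move=> k; apply: le_trans (H0 (k + i)%N) _.
rewrite -mulrA; apply: ler_wpM2l; first exact: ltW.
apply: le_trans (powR_le (N_ge0 _) (H1 k) (ltW he2)) _.
rewrite powRM ?(ltW hC1) ?powR_ge0 // -powRrM (_ : (1 + 1) * (eta / 2) = eta) //.
lra.
Qed.

Lemma QG (ha : condition_a p0 p1 lam) i : QGp i.
Proof.
elim: i => [|i IH] eta he.
  exists 1; split=> // k; rewrite addn0 mul1r.
  rewrite -{1}(powRr1 (N_ge0 k)); apply: ler_powR; first exact: F1.
  lra.
have he2 : 0 < eta / 2 by lra.
have [C1 [hC1 H1]] := IH _ he2.
have [C2 [hC2 H2]] := ZG_of ha IH he2.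
exists (C1 * C2); split; first exact: mulr_gt0.
move=> k; rewrite addnS; apply: le_trans (F3 _) _.
apply: le_trans (_ : (C1 * Nq k `^ (1 + eta / 2)) * (C2 * Nq k `^ (eta / 2)) <= _).
  apply: ler_pM; [exact: N_ge0|exact: Z_ge0|exact: H1|exact: H2].
have hN : 0 < Nq k := lt_le_trans ltr01 (F1 k).
rewrite (_ : 1 + eta = (1 + eta / 2) + eta / 2); last by lra.
by rewrite (powRD' (1 + eta / 2) (eta / 2) hN); apply: le_of_eq; ring.
Qed.

Lemma PG (ha : condition_a p0 p1 lam) M : forall eta : R, 0 < eta ->
  exists C : R, 0 < C /\ forall k, \prod_(i < M) Zq (k + i).+1 <= C * Nq k `^ eta.
Proof.
elim: M => [|M IH] eta he.
  exists 1; split=> // k; rewrite big_ord0 mul1r.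
  apply: le_trans (_ : Nq k `^ 0 <= _); first by rewrite powRr0.
  apply: ler_powR; [exact: F1|exact: ltW].
have he2 : 0 < eta / 2 by lra.
have [C1 [hC1 H1]] := IH _ he2.
have [C2 [hC2 H2]] := ZG_of ha (QG ha M) he2.
exists (C1 * C2); split; first exact: mulr_gt0.
move=> k; rewrite big_ord_recr /=.
apply: le_trans (_ : (C1 * Nq k `^ (eta / 2)) * (C2 * Nq k `^ (eta / 2)) <= _).
  apply: ler_pM; [|exact: Z_ge0|exact: H1|exact: H2].
  by apply: prodr_ge0 => i _; exact: Z_ge0.
have hN : 0 < Nq k := lt_le_trans ltr01 (F1 k).
have e : Nq k `^ eta = Nq k `^ (eta / 2) * Nq k `^ (eta / 2).
  by rewrite -powRD' //; congr (_ `^ _); lra.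
by rewrite e; apply: le_of_eq; ring.
Qed.

Lemma chainmax M k :
  mxk k <= (\prod_(i < M) Zq (k + i).+1) * mxk (k + M).
Proof.
elim: M => [|M IH]; first by rewrite big_ord0 mul1r addn0.
apply: le_trans IH _; rewrite big_ord_recr /= -mulrA addnS.
apply: ler_wpM2l; first by apply: prodr_ge0 => i _; exact: Z_ge0.
exact: F4.
Qed.

Lemma stuck_const j : ~ (exists ub, forall m,
    accel_pred p0 p1 lam (accel_n p0 p1 lam j) m -> (m <= ub)%N) ->
  forall k, (j <= k)%N -> accel_n p0 p1 lam k = accel_n p0 p1 lam j.
Proof.
move=> hj; elim=> [|k IH]; first by rewrite leqn0 => /eqP ->.
rewrite leq_eqVlt => /orP[/eqP <-//|hk].
by rewrite /= IH // accel_next_stuck.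
Qed.

Lemma dir_fwd : condition_a p0 p1 lam ->
  forall eps : R, 0 < eps -> exists C : R, 0 < C /\
     forall k : nat, alph_max (accel_lambda p0 p1 lam k)
         <= C * alph_min (accel_lambda p0 p1 lam k)
              * ((mxnorm (accel_Q p0 p1 lam k))%:R `^ eps).
Proof.
move=> ha eps he.
have hNe : forall k, 1 <= Nq k `^ eps.
  move=> k; apply: le_trans (_ : Nq k `^ 0 <= _); first by rewrite powRr0.
  apply: ler_powR; [exact: F1|exact: ltW].
case: (pselect (exists j, ~ (exists ub, forall m,
    accel_pred p0 p1 lam (accel_n p0 p1 lam j) m -> (m <= ub)%N))) => [[j hj]|hall].
  set C := 1 + \sum_(i < j.+1) mxk i / mnk i.
  have hr : forall i, 0 <= mxk i / mnk i.
    move=> i; apply: divr_ge0; last exact: ltW (mnk_pos i).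
    exact: le_trans (ltW (lk_pos i a0)) (le_alph_max _ a0).
  have hC : 0 < C by rewrite /C ltr_pwDl // sumr_ge0.
  exists C; split=> // k.
  have [k' [hk' ek]] : exists k', (k' <= j)%N /\ lk k = lk k'.
    case: (leqP j k) => hjk; last by exists k; split=> //; exact: ltnW.
    by exists j; split=> //; rewrite /accel_lambda (stuck_const hj hjk).
  rewrite ek.
  have hm := mnk_pos k'.
  apply: le_trans (_ : C * mnk k' <= _); last first.
    by rewrite -[X in X <= _]mulr1; apply: ler_wpM2l; [rewrite mulr_ge0 // ltW|exact: hNe].
  rewrite -[X in X <= _](divfK (lt0r_neq0 hm)); apply: ler_wpM2r; first exact: ltW.
  rewrite /C; apply: le_trans (_ : \sum_(i < j.+1) mxk i / mnk i <= _); last first.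
    by rewrite lerDr.
  have hk'' : (k' < j.+1)%N by [].
  rewrite (bigD1 (Ordinal hk'')) //= lerDl.
  by apply: sumr_ge0 => i _; exact: hr.
have hb : allbnd p0 p1 lam.
  move=> j; case: (pselect (exists ub, forall m,
    accel_pred p0 p1 lam (accel_n p0 p1 lam j) m -> (m <= ub)%N)) => // h.
  by case: hall; exists j.
set M := (4 * #|A|)%N.
have [C [hC HC]] := PG ha M he.
exists C; split=> // k.
apply: le_trans (chainmax M k) _.
have [al eal] := alph_min_ex a0 (lk k).
have hsum : mxk (k + M) <= mnk k.
  rewrite eal; apply: le_trans (full_sum hA hb _ k al); last first.
    by move=> n a; exact: ltW (lb_pos p0 p1 hl n a).
  have [b ->] := alph_max_ex a0 (lk (k + M)).
  rewrite /accel_lambda (bigD1 b) //= lerDl.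
  by apply: sumr_ge0 => i _; exact: ltW (lb_pos p0 p1 hl _ _).
apply: le_trans (_ : (C * Nq k `^ eps) * mnk k <= _); last first.
  by apply: le_of_eq; ring.
apply: ler_pM => //.
- by apply: prodr_ge0 => i _; exact: Z_ge0.
- exact: le_trans (ltW (lk_pos _ a0)) (le_alph_max _ a0).
Qed.

End Main.


Theorem mainTheorem4 (R : realType) (A : finType) (p0 p1 : A -> nat) (lam : A -> R) :
  (2 <= #|A|)%N ->
  is_bij_onto p0 -> is_bij_onto p1 -> admissible p0 p1 ->
  (forall a, 0 < lam a) ->
  keane p0 p1 lam ->
  (forall k : nat,
      total_length lam / (mxnorm (accel_Q p0 p1 lam k))%:R
        <= alph_max (accel_lambda p0 p1 lam k) /\
      alph_min (accel_lambda p0 p1 lam k)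
        <= total_length lam / (mxnorm (accel_Q p0 p1 lam k))%:R) /\
  (condition_a p0 p1 lam <->
   forall eps : R, 0 < eps -> exists C : R, 0 < C /\
     forall k : nat,
       alph_max (accel_lambda p0 p1 lam k)
         <= C * alph_min (accel_lambda p0 p1 lam k)
              * ((mxnorm (accel_Q p0 p1 lam k))%:R `^ eps)).
Proof.
move=> hA _ _ _ hl _.
case/card_gt0P: (ltnW hA) => a0 _.
split; first by move=> k; exact: (part1 p0 p1 hl a0 k).
split; [exact: (dir_fwd hA hl a0)|exact: (dir_back hA hl a0)].
Qed.
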